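(* Let $\mathcal{Q}$ be a small involutive quantaloid. The following conditions are equivalent: (1) for every $\mathcal{Q}$-category $\mathbb{A}$, the functor $L_{\mathbb{A}}\colon(\mathbb{A}_{\mathsf s})_{\mathsf{sc}}\to(\mathbb{A}_{\mathsf{cc}})_{\mathsf s}$, $\phi\mapsto\mathbb{A}(-,S_{\mathbb{A}}-)\otimes\phi$, is an isomorphism of $\mathcal{Q}$-categories; (2) for every $\mathcal{Q}$-category $\mathbb{A}$, every $X\in\mathcal{Q}_0$ and every left adjoint presheaf $\psi\colon *_X\to\mathbb{A}$, the presheaf $\psi_{\mathsf s}\colon *_X\to\mathbb{A}_{\mathsf s}$ is a symmetric left adjoint; (3) for every left adjoint distributor $\Psi\colon\mathbb{A}\to\mathbb{B}$ between $\mathcal{Q}$-categories, the distributor $\Psi_{\mathsf s}\colon\mathbb{A}_{\mathsf s}\to\mathbb{B}_{\mathsf s}$ is a symmetric left adjoint; (4) the inclusion functor $\mathsf{SymMap}(\mathsf{SymDist}(\mathcal{Q}))\to\mathsf{Map}(\mathsf{Dist}(\mathcal{Q}))$ admits a right adjoint $G$ such that $G\circ R=R_{\mathsf s}\circ(-)_{\mathsf s}$ as functors $\mathsf{Cat}(\mathcal{Q})\to\mathsf{SymMap}(\mathsf{SymDist}(\mathcal{Q}))$, where $R\colon\mathsf{Cat}(\mathcal{Q})\to\mathsf{Map}(\mathsf{Dist}(\mathcal{Q}))$ and $R_{\mathsf s}\colon\mathsf{SymCat}(\mathcal{Q})\to\mathsf{SymMap}(\mathsf{SymDist}(\mathcal{Q}))$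 both send a functor $F\colon\mathbb{A}\to\mathbb{B}$ to $\mathbb{B}(-,F-)$, and $(-)_{\mathsf s}\colon\mathsf{Cat}(\mathcal{Q})\to\mathsf{SymCat}(\mathcal{Q})$ is symmetrisation; (5) for every object $X$ of $\mathcal{Q}$ and every family $(f_i\colon X\to X_i,\ g_i\colon X_i\to X)_{i\in I}$ of morphisms in $\mathcal{Q}$: if $f_k\circ g_j\circ f_j\le f_k$ and $g_j\circ f_j\circ g_k\le g_k$ for all $j,k\in I$, and $1_X\le\bigvee_{i\in I}g_i\circ f_i$, then $1_X\le\bigvee_{i\in I}(g_i\wedge f_i^{\mathsf o})\circ(g_i^{\mathsf o}\wedge f_i)$. Moreover, when these conditions hold, the right adjoint in (4) is the functor $\mathsf{Map}(\mathsf{Dist}(\mathcal{Q}))\to\mathsf{SymMap}(\mathsf{SymDist}(\mathcal{Q}))$ sending $\Psi\colon\mathbb{A}\to\mathbb{B}$ to $\Psi_{\mathsf s}\colon\mathbb{A}_{\mathsf s}\to\mathbb{B}_{\mathsf s}$.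
   Context: A quantaloid is a category enriched in the monoidal category $\mathsf{Sup}$ of complete lattices and supremum-preserving maps: each hom-set is a complete lattice and composition preserves arbitrary suprema in each variable. An involution on a quantaloid $\mathcal{Q}$ is an assignment $f\mapsto f^{\mathsf o}$ on morphisms, identity on objects, sending $f\colon X\to Y$ to $f^{\mathsf o}\colon Y\to X$, such that $f\le g$ implies $f^{\mathsf o}\le g^{\mathsf o}$, $(g\circ f)^{\mathsf o}=f^{\mathsf o}\circ g^{\mathsf o}$ and $f^{\mathsf{oo}}=f$. Small means a set of objects. A $\mathcal{Q}$-category $\mathbb{A}$ consists of a set $\mathbb{A}_0$ of objects, each $x$ with a type $tx\in\mathcal{Q}_0$, and hom-arrows $\mathbb{A}(y,x)\colon tx\to ty$ with $\mathbb{A}(z,y)\circ\mathbb{A}(y,x)\le\mathbb{A}(z,x)$ and $1_{tx}\le\mathbb{A}(x,x)$. A functor $F\colon\mathbb{A}\to\mathbb{B}$ is a type-preserving object map with $\mathbb{A}(y,x)\le\mathbb{B}(Fy,Fx)$; this gives the category $\mathsf{Cat}(\mathcal{Q})$. $\mathbb{A}$ is symmetric if $\mathbb{A}(x,y)=\mathbb{A}(y,x)^{\mathsf o}$ for all $x,y$; $\mathsf{SymCat}(\mathcal{Q})$ is the full subcategory of symmetric ones. The symmetrisation $\mathbb{A}_{\mathsf s}$ of $\mathbb{A}$ has the same objects and types and $\mathbb{A}_{\mathsf s}(y,x)=\mathbb{A}(y,x)\wedge\mathbb{A}(x,y)^{\mathsf o}$; a functor $F$ gives $F_{\mathsf s}\colon\mathbb{A}_{\mathsf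 s}\to\mathbb{B}_{\mathsf s}$, $a\mapsto Fa$. $S_{\mathbb{A}}\colon\mathbb{A}_{\mathsf s}\to\mathbb{A}$ is the identity on objects. A distributor $\Phi\colon\mathbb{A}\to\mathbb{B}$ consists of arrows $\Phi(y,x)\colon tx\to ty$ ($x\in\mathbb{A}_0,y\in\mathbb{B}_0$) with $\mathbb{B}(y',y)\circ\Phi(y,x)\le\Phi(y',x)$ and $\Phi(y,x)\circ\mathbb{A}(x,x')\le\Phi(y,x')$. Composition: $(\Psi\otimes\Phi)(z,x)=\bigvee_{y}\Psi(z,y)\circ\Phi(y,x)$; the identity on $\mathbb{A}$ is $\mathbb{A}$ itself; distributors are ordered elementwise, forming a quantaloid $\mathsf{Dist}(\mathcal{Q})$. $\Phi$ is a left adjoint, with right adjoint $\Phi^*\colon\mathbb{B}\to\mathbb{A}$, if $\mathbb{A}\le\Phi^*\otimes\Phi$ and $\Phi\otimes\Phi^*\le\mathbb{B}$. A functor $F\colon\mathbb{A}\to\mathbb{B}$ gives the left adjoint distributor $\mathbb{B}(-,F-)$ (elements $\mathbb{B}(y,Fx)$) with right adjoint $\mathbb{B}(F-,-)$; such distributors are called representable. In particular $\mathbb{A}(-,S_{\mathbb{A}}-)\colon\mathbb{A}_{\mathsf s}\to\mathbb{A}$ has elements $\mathbb{A}(y,x)$, with right adjoint $\mathbb{A}(S_{\mathbb{A}}-,-)$. $\mathsf{Map}(\mathsf{Dist}(\mathcal{Q}))$ is the category of $\mathcal{Q}$-categories and left adjoint distributors. For a distributor $\Phi\colon\mathbb{A}\to\mathbb{B}$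 between symmetric $\mathcal{Q}$-categories, $\Phi^{\mathsf o}\colon\mathbb{B}\to\mathbb{A}$ is the distributor $\Phi^{\mathsf o}(a,b)=\Phi(b,a)^{\mathsf o}$; $\Phi$ is a symmetric left adjoint if it is a left adjoint with right adjoint $\Phi^{\mathsf o}$. $\mathsf{SymMap}(\mathsf{SymDist}(\mathcal{Q}))$ is the category of symmetric $\mathcal{Q}$-categories and symmetric left adjoint distributors. For $X\in\mathcal{Q}_0$, $*_X$ is the one-object $\mathcal{Q}$-category with object of type $X$ and hom $1_X$ (it is symmetric). A presheaf on $\mathbb{A}$ is a distributor $\phi\colon *_X\to\mathbb{A}$. The Cauchy completion $\mathbb{A}_{\mathsf{cc}}$ has as objects the left adjoint presheaves $\phi\colon *_X\to\mathbb{A}$ (type $X$), with $\mathbb{A}_{\mathsf{cc}}(\psi,\phi)$ the unique element of $\psi^*\otimes\phi$. For symmetric $\mathbb{A}$, the symmetric completion $\mathbb{A}_{\mathsf{sc}}$ is the full subcategory of $\mathbb{A}_{\mathsf{cc}}$ on the symmetric left adjoint presheaves. For a left adjoint distributor $\Psi\colon\mathbb{A}\to\mathbb{B}$ with right adjoint $\Psi^*$, $\Psi_{\mathsf s}\colon\mathbb{A}_{\mathsf s}\to\mathbb{B}_{\mathsf s}$ is the distributor $\Psi_{\mathsf s}=(\mathbb{B}(S_{\mathbb{B}}-,-)\otimes\Psi\otimes\mathbb{A}(-,S_{\mathbb{A}}-))\wedge(\mathbb{A}(S_{\mathbb{A}}-,-)\otimes\Psi^*\otimes\mathbb{B}(-,S_{\mathbb{B}}-))^{\mathsf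 o}$, i.e. elementwise $\Psi_{\mathsf s}(b,a)=\Psi(b,a)\wedge\Psi^*(a,b)^{\mathsf o}$. *)

(* Defs.v *)
Set Implicit Arguments.
Record Quantaloid : Type := {
  qOb : Type;
  qHom : qOb -> qOb -> Type;
  qle : forall X Y : qOb, qHom X Y -> qHom X Y -> Prop;
  qsup : forall X Y : qOb, (qHom X Y -> Prop) -> qHom X Y;
  qcomp : forall X Y Z : qOb, qHom Y Z -> qHom X Y -> qHom X Z;
  qid : forall X : qOb, qHom X X;
  qinv : forall X Y : qOb, qHom X Y -> qHom Y X;
  qle_refl : forall X Y (f : qHom X Y), qle f f;
  qle_trans : forall X Y (f g h : qHom X Y), qle f g -> qle g h -> qle f h;
  qle_antisym : forall X Y (f g : qHom X Y), qle f g -> qle g f -> f = g;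
  qsup_ub : forall X Y (S : qHom X Y -> Prop) f, S f -> qle f (qsup S);
  qsup_least : forall X Y (S : qHom X Y -> Prop) g,
      (forall f, S f -> qle f g) -> qle (qsup S) g;
  qcomp_assoc : forall X Y Z W (h : qHom Z W) (g : qHom Y Z) (f : qHom X Y),
      qcomp h (qcomp g f) = qcomp (qcomp h g) f;
  qcomp_id_l : forall X Y (f : qHom X Y), qcomp (qid Y) f = f;
  qcomp_id_r : forall X Y (f : qHom X Y), qcomp f (qid X) = f;
  qcomp_sup_l : forall X Y Z (g : qHom Y Z) (S : qHom X Y -> Prop),
      qcomp g (qsup S) = qsup (fun h => exists f, S f /\ h = qcomp g f);
  qcomp_sup_r : forall X Y Z (S : qHom Y Z -> Prop) (f : qHom X Y),
      qcomp (qsup S) f = qsup (fun h => exists g, S g /\ h = qcomp g f);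
  qinv_mono : forall X Y (f g : qHom X Y), qle f g -> qle (qinv f) (qinv g);
  qinv_comp : forall X Y Z (g : qHom Y Z) (f : qHom X Y),
      qinv (qcomp g f) = qcomp (qinv f) (qinv g);
  qinv_invol : forall X Y (f : qHom X Y), qinv (qinv f) = f
}.

Unset Implicit Arguments.
Arguments qle {q X Y}.
Arguments qsup {q X Y}.
Arguments qcomp {q X Y Z}.
Arguments qid {q}.
Arguments qinv {q X Y}.

Section QStuff.
Context (Q : Quantaloid).

Local Notation Ob := (qOb Q).
Local Notation Hom := (qHom Q).

Definition fsup {X Y : Ob} {I : Type} (F : I -> Hom X Y) : Hom X Y :=
  qsup (fun h => exists i, h = F i).

Definition meet {X Y : Ob} (f g : Hom X Y) : Hom X Y :=
  qsup (fun h => qle h f /\ qle h g).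

Definition castdom {X X' Y : Ob} (e : X = X') (f : Hom X Y) : Hom X' Y :=
  eq_rect X (fun Z => Hom Z Y) f X' e.
Definition castcod {X Y Y' : Ob} (e : Y = Y') (f : Hom X Y) : Hom X Y' :=
  eq_rect Y (fun Z => Hom X Z) f Y' e.

(** * Q-categories (raw data; [chom A y x] is A(y,x) : tx -> ty) *)
Record QCatRaw : Type := {
  cobj : Type;
  cty : cobj -> Ob;
  chom : forall y x : cobj, Hom (cty x) (cty y)
}.

Definition isQCat (A : QCatRaw) : Prop :=
  (forall x y z : cobj A, qle (qcomp (chom A z y) (chom A y x)) (chom A z x)) /\
  (forall x : cobj A, qle (qid (cty A x)) (chom A x x)).

Definition isSym (A : QCatRaw) : Prop :=
  forall x y : cobj A, chom A x y = qinv (chom A y x).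

Definition star (X : Ob) : QCatRaw :=
  {| cobj := unit; cty := fun _ => X; chom := fun _ _ => qid X |}.

Definition sym (A : QCatRaw) : QCatRaw :=
  {| cobj := cobj A; cty := cty A;
     chom := fun y x => meet (chom A y x) (qinv (chom A x y)) |}.

Record QFun (A B : QCatRaw) : Type := {
  fmap : cobj A -> cobj B;
  fty : forall x, cty B (fmap x) = cty A x
}.
Arguments fmap {A B}.
Arguments fty {A B}.

Definition isFunctor {A B : QCatRaw} (F : QFun A B) : Prop :=
  forall y x : cobj A,
    qle (chom A y x)
        (castdom (fty F x) (castcod (fty F y) (chom B (fmap F y) (fmap F x)))).

Definition isIsoFun {A B : QCatRaw} (F : QFun A B) : Prop :=
  isFunctor F /\
  exists G : QFun B A, isFunctor G /\
    (forall x, fmap G (fmap F x) = x) /\ (forall y, fmap F (fmap G y) = y).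

Definition symF {A B : QCatRaw} (F : QFun A B) : QFun (sym A) (sym B) :=
  @Build_QFun (sym A) (sym B) (fmap F) (fty F).

(** * Distributors ([Φ y x] is Φ(y,x) : tx -> ty) *)
Definition Dist (A B : QCatRaw) : Type :=
  forall (y : cobj B) (x : cobj A), Hom (cty A x) (cty B y).

Definition isDist (A B : QCatRaw) (Phi : Dist A B) : Prop :=
  (forall y' y x, qle (qcomp (chom B y' y) (Phi y x)) (Phi y' x)) /\
  (forall y x x', qle (qcomp (Phi y x) (chom A x x')) (Phi y x')).

Definition dcomp {A B C : QCatRaw} (Psi : Dist B C) (Phi : Dist A B) : Dist A C :=
  fun z x => fsup (fun y : cobj B => qcomp (Psi z y) (Phi y x)).

Definition dle {A B : QCatRaw} (Phi Psi : Dist A B) : Prop :=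
  forall y x, qle (Phi y x) (Psi y x).

Definition deq {A B : QCatRaw} (Phi Psi : Dist A B) : Prop :=
  forall y x, Phi y x = Psi y x.

Definition did (A : QCatRaw) : Dist A A := chom A.

Definition isLeftAdjWith (A B : QCatRaw) (Phi : Dist A B) (Phis : Dist B A) : Prop :=
  isDist A B Phi /\ isDist B A Phis /\
  dle (did A) (dcomp Phis Phi) /\ dle (dcomp Phi Phis) (did B).

Definition isLeftAdj (A B : QCatRaw) (Phi : Dist A B) : Prop :=
  exists Phis, isLeftAdjWith A B Phi Phis.

Definition dinv {A B : QCatRaw} (Phi : Dist A B) : Dist B A :=
  fun a b => qinv (Phi b a).

Definition isSymLeftAdj (A B : QCatRaw) (Phi : Dist A B) : Prop :=
  isLeftAdjWith A B Phi (dinv Phi).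

(** the (unique, when it exists) right adjoint, elementwise *)
Definition radj (A B : QCatRaw) (Phi : Dist A B) : Dist B A :=
  fun a b => qsup (fun h => exists Phis, isLeftAdjWith A B Phi Phis /\ h = Phis a b).

Definition rep {A B : QCatRaw} (F : QFun A B) : Dist A B :=
  fun y x => castdom (fty F x) (chom B y (fmap F x)).

Definition SA (A : QCatRaw) : Dist (sym A) A := fun y x => chom A y x.

Definition dsymW {A B : QCatRaw} (Psi : Dist A B) (Psis : Dist B A)
  : Dist (sym A) (sym B) :=
  fun b a => meet (Psi b a) (qinv (Psis a b)).

Definition dsym (A B : QCatRaw) (Psi : Dist A B) : Dist (sym A) (sym B) :=
  dsymW Psi (radj A B Psi).

(* A_cc(ψ,φ) = the unique element of ψ* ⊗ φ (ψ* the right adjoint of ψ) *)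
Definition ccHom {A : QCatRaw} {X Y : Ob} (psi : Dist (star Y) A) (phi : Dist (star X) A)
  : Hom X Y :=
  qsup (fun h => exists psis : Dist A (star Y),
           isLeftAdjWith (star Y) A psi psis /\ h = dcomp psis phi tt tt).

Definition cc (A : QCatRaw) : QCatRaw :=
  {| cobj := {X : Ob & {phi : Dist (star X) A | isLeftAdj (star X) A phi}};
     cty := fun p => projT1 p;
     chom := fun q p => ccHom (proj1_sig (projT2 q)) (proj1_sig (projT2 p)) |}.

Definition sc (A : QCatRaw) : QCatRaw :=
  {| cobj := {X : Ob & {phi : Dist (star X) A | isSymLeftAdj (star X) A phi}};
     cty := fun p => projT1 p;
     chom := fun q p => ccHom (proj1_sig (projT2 q)) (proj1_sig (projT2 p)) |}.

(* A functor G = (G0, G1) : Map(Dist(Q)) -> SymMap(SymDist(Q)) which is right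
   adjoint to the inclusion, presented by a natural counit eps with the
   universal property.  (G0, G1 are only constrained on Q-categories and left
   adjoint distributors.) *)
Definition IsRightAdjInc (G0 : QCatRaw -> QCatRaw)
    (G1 : forall A B : QCatRaw, Dist A B -> Dist (G0 A) (G0 B)) : Prop :=
  (forall A, isQCat A -> isQCat (G0 A) /\ isSym (G0 A)) /\
  (forall A B Phi, isQCat A -> isQCat B -> isLeftAdj A B Phi ->
     isSymLeftAdj (G0 A) (G0 B) (G1 A B Phi)) /\
  (forall A, isQCat A -> deq (G1 A A (did A)) (did (G0 A))) /\
  (forall A B C (Phi : Dist A B) (Psi : Dist B C),
     isQCat A -> isQCat B -> isQCat C -> isLeftAdj A B Phi -> isLeftAdj B C Psi ->
     deq (G1 A C (dcomp Psi Phi)) (dcomp (G1 B C Psi) (G1 A B Phi))) /\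
  exists eps : forall A, Dist (G0 A) A,
    (forall A, isQCat A -> isLeftAdj (G0 A) A (eps A)) /\
    (forall A B (Phi : Dist A B), isQCat A -> isQCat B -> isLeftAdj A B Phi ->
       deq (dcomp Phi (eps A)) (dcomp (eps B) (G1 A B Phi))) /\
    (forall S A (Phi : Dist S A), isQCat S -> isSym S -> isQCat A ->
       isLeftAdj S A Phi ->
       exists Phi' : Dist S (G0 A),
         isSymLeftAdj S (G0 A) Phi' /\ deq (dcomp (eps A) Phi') Phi /\
         forall Phi'' : Dist S (G0 A),
           isSymLeftAdj S (G0 A) Phi'' -> deq (dcomp (eps A) Phi'') Phi ->
           deq Phi'' Phi').

Definition CommutesWithR (G0 : QCatRaw -> QCatRaw)
    (G1 : forall A B : QCatRaw, Dist A B -> Dist (G0 A) (G0 B)) : Prop :=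
  (forall A, isQCat A -> G0 A = sym A) /\
  (forall A B (F : QFun A B), isQCat A -> isQCat B -> isFunctor F ->
     existT (fun p : QCatRaw * QCatRaw => Dist (fst p) (snd p))
            (G0 A, G0 B) (G1 A B (rep F))
     = existT (fun p : QCatRaw * QCatRaw => Dist (fst p) (snd p))
            (sym A, sym B) (rep (symF F))).

(* (1) L_A : (A_s)_sc -> (A_cc)_s, φ ↦ A(-,S_A-) ⊗ φ, is an isomorphism of
   Q-categories: there is an isomorphism whose object map is φ ↦ A(-,S_A-)⊗φ. *)
Definition Cond1 : Prop :=
  forall A : QCatRaw, isQCat A ->
    exists L : QFun (sc (sym A)) (sym (cc A)),
      isIsoFun L /\
      forall p : cobj (sc (sym A)),
        existT (fun X => Dist (star X) A) (projT1 p) (dcomp (SA A) (proj1_sig (projT2 p)))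
        = existT (fun X => Dist (star X) A)
                 (projT1 (fmap L p : cobj (cc A)))
                 (proj1_sig (projT2 (fmap L p : cobj (cc A)))).

Definition Cond2 : Prop :=
  forall A : QCatRaw, isQCat A ->
  forall (X : Ob) (psi : Dist (star X) A) (psis : Dist A (star X)),
    isLeftAdjWith (star X) A psi psis ->
    isSymLeftAdj (star X) (sym A) (dsymW psi psis).

Definition Cond3 : Prop :=
  forall A B : QCatRaw, isQCat A -> isQCat B ->
  forall (Psi : Dist A B) (Psis : Dist B A),
    isLeftAdjWith A B Psi Psis ->
    isSymLeftAdj (sym A) (sym B) (dsymW Psi Psis).

Definition Cond4 : Prop :=
  exists (G0 : QCatRaw -> QCatRaw) (G1 : forall A B, Dist A B -> Dist (G0 A) (G0 B)),
    IsRightAdjInc G0 G1 /\ CommutesWithR G0 G1.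

Definition Cond5 : Prop :=
  forall (X : Ob) (I : Type) (Xi : I -> Ob)
         (f : forall i, Hom X (Xi i)) (g : forall i, Hom (Xi i) X),
    (forall j k, qle (qcomp (f k) (qcomp (g j) (f j))) (f k)) ->
    (forall j k, qle (qcomp (g j) (qcomp (f j) (g k))) (g k)) ->
    qle (qid X) (fsup (fun i => qcomp (g i) (f i))) ->
    qle (qid X)
        (fsup (fun i => qcomp (meet (g i) (qinv (f i))) (meet (qinv (g i)) (f i)))).

End QStuff.

(* Main.v *)
Require Import Defs.
From Stdlib Require Import Setoid FunctionalExtensionality ProofIrrelevance Eqdep.

Arguments fsup {Q X Y I} F.
Arguments meet {Q X Y} f g.
Arguments castdom {Q X X' Y} e f.
Arguments castcod {Q X Y Y'} e f.
Arguments Build_QCatRaw {Q} cobj cty chom.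
Arguments cobj {Q} q.
Arguments cty {Q} q _.
Arguments chom {Q} q y x.
Arguments isQCat {Q} A.
Arguments isSym {Q} A.
Arguments star {Q} X.
Arguments sym {Q} A.
Arguments QFun {Q} A B.
Arguments Build_QFun {Q A B} fmap fty.
Arguments fmap {Q A B} q _.
Arguments fty {Q A B} q x.
Arguments isFunctor {Q A B} F.
Arguments isIsoFun {Q A B} F.
Arguments symF {Q A B} F.
Arguments Dist {Q} A B.
Arguments isDist {Q} A B Phi.
Arguments dcomp {Q A B C} Psi Phi y x.
Arguments dle {Q A B} Phi Psi.
Arguments deq {Q A B} Phi Psi.
Arguments did {Q} A.
Arguments isLeftAdjWith {Q} A B Phi Phis.
Arguments isLeftAdj {Q} A B Phi.
Arguments dinv {Q A B} Phi.
Arguments isSymLeftAdj {Q} A B Phi.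
Arguments radj {Q} A B Phi.
Arguments rep {Q A B} F.
Arguments SA {Q} A.
Arguments dsymW {Q A B} Psi Psis.
Arguments dsym {Q} A B Psi.
Arguments ccHom {Q A X Y} psi phi.
Arguments cc {Q} A.
Arguments sc {Q} A.

Section Basics.
Context {Q : Quantaloid}.
Local Notation Ob := (qOb Q).
Local Notation Hom := (qHom Q).
Local Notation "f <= g" := (qle f g).
Local Notation "g ∘ f" := (qcomp g f) (at level 40, left associativity).

Lemma id_l {X Y} (f : Hom X Y) : qid Y ∘ f = f. Proof. apply qcomp_id_l. Qed.
Lemma id_r {X Y} (f : Hom X Y) : f ∘ qid X = f. Proof. apply qcomp_id_r. Qed.
Lemma le_refl {X Y} (f : Hom X Y) : f <= f. Proof. apply qle_refl. Qed.
Lemma le_trans {X Y} (f g h : Hom X Y) : f <= g -> g <= h -> f <= h.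
Proof. apply qle_trans. Qed.
Lemma le_antisym {X Y} (f g : Hom X Y) : f <= g -> g <= f -> f = g.
Proof. apply qle_antisym. Qed.

Lemma fsup_ub {X Y I} (F : I -> Hom X Y) i : F i <= fsup F.
Proof. apply qsup_ub. exists i; reflexivity. Qed.
Lemma le_fsup {X Y I} (F : I -> Hom X Y) i h : h <= F i -> h <= fsup F.
Proof. intro H; eapply le_trans; [exact H| apply fsup_ub]. Qed.
Lemma fsup_le {X Y I} (F : I -> Hom X Y) h : (forall i, F i <= h) -> fsup F <= h.
Proof. intro H; apply qsup_least; intros f [i ->]; apply H. Qed.

Lemma comp_mono_l {X Y Z} (g : Hom Y Z) (f f' : Hom X Y) : f <= f' -> g ∘ f <= g ∘ f'.
Proof.
  intro H.
  assert (E : f' = qsup (fun h => h = f \/ h = f')).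
  { apply le_antisym. apply qsup_ub; auto. apply qsup_least; intros h [->| ->]; auto using le_refl. }
  rewrite E, qcomp_sup_l. apply qsup_ub. exists f; split; auto.
Qed.
Lemma comp_mono_r {X Y Z} (g g' : Hom Y Z) (f : Hom X Y) : g <= g' -> g ∘ f <= g' ∘ f.
Proof.
  intro H.
  assert (E : g' = qsup (fun h => h = g \/ h = g')).
  { apply le_antisym. apply qsup_ub; auto. apply qsup_least; intros h [->| ->]; auto using le_refl. }
  rewrite E, qcomp_sup_r. apply qsup_ub. exists g; split; auto.
Qed.
Lemma comp_mono {X Y Z} (g g' : Hom Y Z) (f f' : Hom X Y) : g <= g' -> f <= f' -> g ∘ f <= g' ∘ f'.
Proof. intros; eapply le_trans; [apply comp_mono_l; eauto| apply comp_mono_r; auto]. Qed.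

Lemma comp_qsup_l_le {X Y Z} (g : Hom Y Z) (S : Hom X Y -> Prop) h :
  (forall f, S f -> g ∘ f <= h) -> g ∘ qsup S <= h.
Proof. intro H; rewrite qcomp_sup_l; apply qsup_least; intros k [f [Hf ->]]; auto. Qed.
Lemma comp_qsup_r_le {X Y Z} (S : Hom Y Z -> Prop) (f : Hom X Y) h :
  (forall g, S g -> g ∘ f <= h) -> qsup S ∘ f <= h.
Proof. intro H; rewrite qcomp_sup_r; apply qsup_least; intros k [g [Hg ->]]; auto. Qed.
Lemma comp_fsup_l_le {X Y Z I} (g : Hom Y Z) (F : I -> Hom X Y) h :
  (forall i, g ∘ F i <= h) -> g ∘ fsup F <= h.
Proof. intro H; apply comp_qsup_l_le; intros f [i ->]; auto. Qed.
Lemma comp_fsup_r_le {X Y Z I} (F : I -> Hom Y Z) (f : Hom X Y) h :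
  (forall i, F i ∘ f <= h) -> fsup F ∘ f <= h.
Proof. intro H; apply comp_qsup_r_le; intros g [i ->]; auto. Qed.
Lemma comp_fsup_l {X Y Z I} (g : Hom Y Z) (F : I -> Hom X Y) :
  g ∘ fsup F = fsup (fun i => g ∘ F i).
Proof.
  apply le_antisym. apply comp_fsup_l_le; intro i; apply (fsup_ub (fun i => g ∘ F i)).
  apply fsup_le; intro i; apply comp_mono_l, fsup_ub.
Qed.
Lemma comp_fsup_r {X Y Z I} (F : I -> Hom Y Z) (f : Hom X Y) :
  fsup F ∘ f = fsup (fun i => F i ∘ f).
Proof.
  apply le_antisym. apply comp_fsup_r_le; intro i; apply (fsup_ub (fun i => F i ∘ f)).
  apply fsup_le; intro i; apply comp_mono_r, fsup_ub.
Qed.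

Lemma assoc {X Y Z W} (h : Hom Z W) (g : Hom Y Z) (f : Hom X Y) : h ∘ (g ∘ f) = h ∘ g ∘ f.
Proof. apply qcomp_assoc. Qed.

Lemma meet_l {X Y} (f g : Hom X Y) : meet f g <= f.
Proof. apply qsup_least; intros h [H _]; auto. Qed.
Lemma meet_r {X Y} (f g : Hom X Y) : meet f g <= g.
Proof. apply qsup_least; intros h [_ H]; auto. Qed.
Lemma meet_glb {X Y} (f g h : Hom X Y) : h <= f -> h <= g -> h <= meet f g.
Proof. intros; apply qsup_ub; auto. Qed.
Lemma meet_comm {X Y} (f g : Hom X Y) : meet f g = meet g f.
Proof. apply le_antisym; apply meet_glb; auto using meet_l, meet_r. Qed.
Lemma meet_mono {X Y} (f f' g g' : Hom X Y) : f <= f' -> g <= g' -> meet f g <= meet f' g'.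
Proof. intros; apply meet_glb; [eapply le_trans; [apply meet_l|auto] | eapply le_trans; [apply meet_r|auto]]. Qed.

Lemma inv_mono {X Y} (f g : Hom X Y) : f <= g -> qinv f <= qinv g.
Proof. apply qinv_mono. Qed.
Lemma inv_mono' {X Y} (f g : Hom X Y) : qinv f <= qinv g -> f <= g.
Proof. intro H; rewrite <- (qinv_invol _ _ _ f), <- (qinv_invol _ _ _ g); apply inv_mono; auto. Qed.
Lemma inv_inv {X Y} (f : Hom X Y) : qinv (qinv f) = f.
Proof. apply qinv_invol. Qed.
Lemma inv_comp {X Y Z} (g : Hom Y Z) (f : Hom X Y) : qinv (g ∘ f) = qinv f ∘ qinv g.
Proof. apply qinv_comp. Qed.
Lemma le_inv_l {X Y} (f : Hom X Y) g : f <= qinv g -> qinv f <= g.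
Proof. intro H; rewrite <- (inv_inv g); apply inv_mono; auto. Qed.
Lemma le_inv_r {X Y} (f : Hom X Y) g : qinv f <= g -> f <= qinv g.
Proof. intro H; rewrite <- (inv_inv f); apply inv_mono; auto. Qed.
Lemma inv_meet {X Y} (f g : Hom X Y) : qinv (meet f g) = meet (qinv f) (qinv g).
Proof.
  apply le_antisym.
  - apply meet_glb; apply inv_mono; auto using meet_l, meet_r.
  - apply le_inv_r; apply meet_glb; apply le_inv_l; auto using meet_l, meet_r.
Qed.
Lemma inv_fsup {X Y I} (F : I -> Hom X Y) : qinv (fsup F) = fsup (fun i => qinv (F i)).
Proof.
  apply le_antisym.
  - apply le_inv_l, fsup_le; intro i; apply le_inv_r, (fsup_ub (fun i => qinv (F i))).
  - apply fsup_le; intro i; apply inv_mono, fsup_ub.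
Qed.
Lemma inv_id (X : Ob) : qinv (qid X) = qid X.
Proof.
  transitivity (qinv (qid X) ∘ qinv (qinv (qid X))).
  { rewrite inv_inv, id_r; reflexivity. }
  rewrite <- inv_comp, id_r, inv_inv; reflexivity.
Qed.

Lemma castdom_comp {X X' Y Z} (e : X = X') (g : Hom Y Z) (f : Hom X Y) :
  castdom e (g ∘ f) = g ∘ castdom e f.
Proof. destruct e; reflexivity. Qed.
Lemma castcod_comp {X Y Y' Z} (e : Z = Y') (g : Hom Y Z) (f : Hom X Y) :
  castcod e (g ∘ f) = castcod e g ∘ f.
Proof. destruct e; reflexivity. Qed.
Lemma cast_cancel {X Y Y' Z} (e : Y = Y') (g : Hom Y Z) (f : Hom X Y) :
  castdom e g ∘ castcod e f = g ∘ f.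
Proof. destruct e; reflexivity. Qed.
Lemma castdom_mono {X X' Y} (e : X = X') (f g : Hom X Y) : f <= g -> castdom e f <= castdom e g.
Proof. destruct e; auto. Qed.
Lemma castcod_mono {X Y Y'} (e : Y = Y') (f g : Hom X Y) : f <= g -> castcod e f <= castcod e g.
Proof. destruct e; auto. Qed.
Lemma castdom_castcod {X X' Y Y'} (e : X = X') (e' : Y = Y') (f : Hom X Y) :
  castdom e (castcod e' f) = castcod e' (castdom e f).
Proof. destruct e, e'; reflexivity. Qed.
Lemma inv_castcod {X Y Y'} (e : Y = Y') (f : Hom X Y) :
  qinv (castcod e f) = castdom e (qinv f).
Proof. destruct e; reflexivity. Qed.
Lemma castdom_meet {X X' Y} (e : X = X') (f g : Hom X Y) :
  castdom e (meet f g) = meet (castdom e f) (castdom e g).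
Proof. destruct e; reflexivity. Qed.

End Basics.

Section Dists.
Context {Q : Quantaloid}.
Local Notation Ob := (qOb Q).
Local Notation Hom := (qHom Q).
Local Notation Cat := (QCatRaw Q).
Local Notation "f <= g" := (qle f g).
Local Notation "g ∘ f" := (qcomp g f) (at level 40, left associativity).

Lemma deq_eq {A B : Cat} (Phi Psi : Dist A B) : deq Phi Psi -> Phi = Psi.
Proof.
  intro H. apply functional_extensionality_dep; intro y.
  apply functional_extensionality_dep; intro x. apply H.
Qed.
Lemma dle_antisym {A B : Cat} (Phi Psi : Dist A B) : dle Phi Psi -> dle Psi Phi -> Phi = Psi.
Proof. intros H1 H2; apply deq_eq; intros y x; apply le_antisym; auto. Qed.
Lemma dle_refl {A B : Cat} (Phi : Dist A B) : dle Phi Phi.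
Proof. intros y x; apply le_refl. Qed.
Lemma dle_trans {A B : Cat} (Phi Psi Chi : Dist A B) : dle Phi Psi -> dle Psi Chi -> dle Phi Chi.
Proof. intros H1 H2 y x; eapply le_trans; eauto. Qed.

Lemma dcomp_assoc {A B C D : Cat} (Chi : Dist C D) (Psi : Dist B C) (Phi : Dist A B) :
  dcomp Chi (dcomp Psi Phi) = dcomp (dcomp Chi Psi) Phi.
Proof.
  apply deq_eq; intros z x; unfold dcomp; apply le_antisym.
  - apply fsup_le; intro y; apply comp_fsup_l_le; intro w.
    rewrite assoc. apply (le_fsup _ w). apply comp_mono_r.
    apply (fsup_ub (fun y => Chi z y ∘ Psi y w)).
  - apply fsup_le; intro w; apply comp_fsup_r_le; intro y.
    rewrite <- assoc. apply (le_fsup _ y). apply comp_mono_l.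
    apply (fsup_ub (fun w => Psi y w ∘ Phi w x)).
Qed.

Lemma dcomp_mono {A B C : Cat} (Psi Psi' : Dist B C) (Phi Phi' : Dist A B) :
  dle Psi Psi' -> dle Phi Phi' -> dle (dcomp Psi Phi) (dcomp Psi' Phi').
Proof.
  intros H1 H2 z x; unfold dcomp; apply fsup_le; intro y.
  apply (le_fsup _ y); apply comp_mono; auto.
Qed.

Lemma dist_id_l {A B : Cat} (Phi : Dist A B) :
  isQCat B -> isDist A B Phi -> dcomp (did B) Phi = Phi.
Proof.
  intros [_ HB] [H1 _]; apply deq_eq; intros y x; unfold dcomp, did; apply le_antisym.
  - apply fsup_le; intro; apply H1.
  - apply (le_fsup _ y). rewrite <- (id_l (Phi y x)) at 1. apply comp_mono_r, HB.
Qed.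
Lemma dist_id_r {A B : Cat} (Phi : Dist A B) :
  isQCat A -> isDist A B Phi -> dcomp Phi (did A) = Phi.
Proof.
  intros [_ HA] [_ H2]; apply deq_eq; intros y x; unfold dcomp, did; apply le_antisym.
  - apply fsup_le; intro; apply H2.
  - apply (le_fsup _ x). rewrite <- (id_r (Phi y x)) at 1. apply comp_mono_l, HA.
Qed.
Lemma did_dist (A : Cat) : isQCat A -> isDist A A (did A).
Proof. intros [H _]; split; intros; apply H. Qed.
Lemma did_did (A : Cat) : isQCat A -> dcomp (did A) (did A) = did A.
Proof. intro H; apply dist_id_l; auto using did_dist. Qed.

Lemma dist_comp {A B C : Cat} (Psi : Dist B C) (Phi : Dist A B) :
  isDist A B Phi -> isDist B C Psi -> isDist A C (dcomp Psi Phi).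
Proof.
  intros [P1 P2] [S1 S2]; split; intros; unfold dcomp.
  - apply comp_fsup_l_le; intro y0. rewrite assoc. apply (le_fsup _ y0), comp_mono_r, S1.
  - apply comp_fsup_r_le; intro y0. rewrite <- assoc. apply (le_fsup _ y0), comp_mono_l, P2.
Qed.

Lemma radj_unique {A B : Cat} (Phi : Dist A B) P1 P2 :
  isQCat A -> isQCat B -> isLeftAdjWith A B Phi P1 -> isLeftAdjWith A B Phi P2 -> P1 = P2.
Proof.
  intros HA HB [D1 [D2 [U1 C1]]] [E1 [E2 [U2 C2]]].
  assert (forall P P', isDist B A P -> isDist B A P' -> dle (did A) (dcomp P' Phi) ->
            dle (dcomp Phi P) (did B) -> dle P P').
  { intros P P' HP HP' U C.
    rewrite <- (dist_id_l P HA HP).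
    eapply dle_trans. apply dcomp_mono. apply U. apply dle_refl.
    rewrite <- dcomp_assoc. rewrite <- (dist_id_r P' HB HP') at 2.
    apply dcomp_mono; auto using dle_refl. }
  apply dle_antisym; auto.
Qed.

Lemma radj_eq {A B : Cat} (Phi : Dist A B) Phis :
  isQCat A -> isQCat B -> isLeftAdjWith A B Phi Phis -> radj A B Phi = Phis.
Proof.
  intros HA HB H. apply deq_eq; intros a b; unfold radj; apply le_antisym.
  - apply qsup_least; intros h [P [HP ->]].
    rewrite (radj_unique Phi P Phis HA HB HP H); apply le_refl.
  - apply qsup_ub; exists Phis; auto.
Qed.

Lemma la_comp {A B C : Cat} (Phi : Dist A B) Phis (Psi : Dist B C) Psis :
  isQCat A -> isQCat B -> isQCat C ->
  isLeftAdjWith A B Phi Phis -> isLeftAdjWith B C Psi Psis ->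
  isLeftAdjWith A C (dcomp Psi Phi) (dcomp Phis Psis).
Proof.
  intros HA HB HC [D1 [D2 [U1 C1]]] [E1 [E2 [U2 C2]]].
  split; [apply dist_comp; auto|]. split; [apply dist_comp; auto|]. split.
  - eapply dle_trans; [apply U1|].
    replace (dcomp (dcomp Phis Psis) (dcomp Psi Phi)) with (dcomp Phis (dcomp (dcomp Psis Psi) Phi))
      by (rewrite !dcomp_assoc; reflexivity).
    apply dcomp_mono; [apply dle_refl|].
    rewrite <- (dist_id_l Phi HB D1) at 1.
    apply dcomp_mono; auto using dle_refl.
  - rewrite dcomp_assoc. rewrite <- (dcomp_assoc Psi Phi Phis).
    eapply dle_trans. apply dcomp_mono; [|apply dle_refl]. apply dcomp_mono; [apply dle_refl|apply C1].
    rewrite (dist_id_r Psi HB E1). auto.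
Qed.

Lemma sym_qcat (A : Cat) : isQCat A -> isQCat (sym A) /\ isSym (sym A).
Proof.
  intros [H1 H2]; split; [split|].
  - intros x y z; simpl. apply meet_glb.
    + eapply le_trans; [apply comp_mono; apply meet_l|apply H1].
    + eapply le_trans; [apply comp_mono; apply meet_r|].
      rewrite <- inv_comp. apply inv_mono, H1.
  - intros x; simpl; apply meet_glb; auto. rewrite <- inv_id; apply inv_mono; auto.
  - intros x y; simpl. rewrite inv_meet, inv_inv, meet_comm; reflexivity.
Qed.

Lemma sym_id (A : Cat) x : isQCat A -> qid _ <= chom (sym A) x x.
Proof. intro H; apply (proj2 (proj1 (sym_qcat A H))). Qed.

Lemma dinv_dist {A B : Cat} (Phi : Dist A B) :
  isSym A -> isSym B -> isDist A B Phi -> isDist B A (dinv Phi).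
Proof.
  intros SA' SB [H1 H2]; split; intros; unfold dinv.
  - rewrite (SA' y' y), <- inv_comp; apply inv_mono, H2.
  - rewrite (SB x x'), <- inv_comp; apply inv_mono, H1.
Qed.

Lemma star_qcat (X : Ob) : isQCat (star X).
Proof. split; intros; simpl; rewrite ?id_l; apply le_refl. Qed.
Lemma star_sym (X : Ob) : isSym (star X).
Proof. intros x y; simpl; rewrite inv_id; reflexivity. Qed.

End Dists.

Section Sym.
Context {Q : Quantaloid}.
Local Notation Ob := (qOb Q).
Local Notation Hom := (qHom Q).
Local Notation Cat := (QCatRaw Q).
Local Notation "f <= g" := (qle f g).
Local Notation "g ∘ f" := (qcomp g f) (at level 40, left associativity).

Definition SAs (A : Cat) : Dist A (sym A) := fun x y => chom A x y.

Lemma id_le_comp_r {X Y} (f : Hom X Y) (h : Hom X X) : qid X <= h -> f <= f ∘ h.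
Proof. intro H; rewrite <- (id_r f) at 1; apply comp_mono_l; auto. Qed.
Lemma id_le_comp_l {X Y} (f : Hom X Y) (h : Hom Y Y) : qid Y <= h -> f <= h ∘ f.
Proof. intro H; rewrite <- (id_l f) at 1; apply comp_mono_r; auto. Qed.

Lemma SA_la (A : Cat) : isQCat A -> isLeftAdjWith (sym A) A (SA A) (SAs A).
Proof.
  intros [H1 H2]. unfold SA, SAs.
  split; [split|split; [split|split]]; intros; simpl.
  - apply H1.
  - eapply le_trans; [apply comp_mono_l, meet_l| apply H1].
  - eapply le_trans; [apply comp_mono_r, meet_l| apply H1].
  - apply H1.
  - intros y x; unfold dcomp, did; simpl. apply (le_fsup _ x).
    eapply le_trans; [apply meet_l|]. apply id_le_comp_r, H2.
  - intros y x; unfold dcomp, did; simpl. apply fsup_le; intro; apply H1.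
Qed.

Lemma dsym_dist {A B : Cat} (Psi : Dist A B) Psis :
  isDist A B Psi -> isDist B A Psis -> isDist (sym A) (sym B) (dsymW Psi Psis).
Proof.
  intros [P1 P2] [S1 S2]; unfold dsymW; split; intros; simpl; apply meet_glb.
  - eapply le_trans; [apply comp_mono; apply meet_l| apply P1].
  - eapply le_trans; [apply comp_mono; apply meet_r|]. rewrite <- inv_comp. apply inv_mono, S2.
  - eapply le_trans; [apply comp_mono; apply meet_l| apply P2].
  - eapply le_trans; [apply comp_mono; apply meet_r|]. rewrite <- inv_comp. apply inv_mono, S1.
Qed.

Lemma inv_dsymW_le1 {A B : Cat} (Psi : Dist A B) Psis b a :
  qinv (dsymW Psi Psis b a) <= Psis a b.
Proof. unfold dsymW; rewrite inv_meet, inv_inv; apply meet_r. Qed.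
Lemma inv_dsymW_le2 {A B : Cat} (Psi : Dist A B) Psis b a :
  qinv (dsymW Psi Psis b a) <= qinv (Psi b a).
Proof. unfold dsymW; rewrite inv_meet; apply meet_l. Qed.

Lemma dsym_SA_comp {S A : Cat} (phi : Dist S (sym A)) :
  isQCat A -> isDist S (sym A) phi -> dle (dcomp phi (dinv phi)) (did (sym A)) ->
  (forall s, qid _ <= dcomp (dinv phi) phi s s) ->
  dsymW (dcomp (SA A) phi) (dcomp (dinv phi) (SAs A)) = phi.
Proof.
  intros [HA1 HA2] [D1 D2] C U. apply deq_eq; intros a s.
  unfold dsymW, dcomp, SA, SAs, dinv; apply le_antisym.
  - set (x := meet _ _).
    eapply le_trans; [apply (id_le_comp_r x _ (U s))|].
    unfold dcomp, dinv. rewrite comp_fsup_l. apply fsup_le; intro c.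
    rewrite assoc. eapply le_trans; [|apply (D1 a c s)]. apply comp_mono_r.
    simpl. apply meet_glb.
    + eapply le_trans; [apply comp_mono_r, meet_l|].
      apply comp_fsup_r_le; intro a'. rewrite <- assoc.
      eapply le_trans; [apply comp_mono_l|apply (HA1 c a' a)].
      eapply le_trans; [|apply meet_l].
      eapply le_trans; [|apply (C a' c)]. unfold dcomp, dinv.
      apply (fsup_ub (fun s' => phi a' s' ∘ qinv (phi c s'))).
    + eapply le_trans; [apply comp_mono_r, meet_r|].
      rewrite <- inv_comp. apply inv_mono.
      apply comp_fsup_l_le; intro a'. rewrite assoc.
      eapply le_trans; [apply comp_mono_r|apply (HA1 a a' c)].
      eapply le_trans; [|apply meet_l].
      eapply le_trans; [|apply (C c a')]. unfold dcomp, dinv.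
      apply (fsup_ub (fun s' => phi c s' ∘ qinv (phi a' s'))).
  - apply meet_glb.
    + apply (le_fsup _ a). apply id_le_comp_l, HA2.
    + apply le_inv_r. apply (le_fsup _ a). apply id_le_comp_r, HA2.
Qed.

Lemma SA_dsym {S A : Cat} (Psi : Dist S A) Psis :
  isDist S A Psi -> dle (dcomp Psi Psis) (did A) ->
  (forall s, qid _ <= dcomp (dinv (dsymW Psi Psis)) (dsymW Psi Psis) s s) ->
  dcomp (SA A) (dsymW Psi Psis) = Psi.
Proof.
  intros [D1 D2] C U. apply deq_eq; intros a s. unfold dcomp at 1. unfold SA. apply le_antisym.
  - apply fsup_le; intro a'. eapply le_trans; [apply comp_mono_l; apply meet_l|apply D1].
  - eapply le_trans; [apply (id_le_comp_r _ _ (U s))|].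
    unfold dcomp, dinv. rewrite comp_fsup_l. apply fsup_le; intro c.
    apply (le_fsup _ c). rewrite assoc. apply comp_mono_r.
    eapply le_trans; [apply comp_mono_l, inv_dsymW_le1|].
    eapply le_trans; [|apply (C a c)]. unfold dcomp.
    apply (fsup_ub (fun s' => Psi a s' ∘ Psis s' c)).
Qed.

Lemma symla_unit_diag {S B : Cat} (phi : Dist S B) :
  isQCat S -> isSymLeftAdj S B phi -> forall s, qid _ <= dcomp (dinv phi) phi s s.
Proof.
  intros [_ H] [_ [_ [U _]]] s. eapply le_trans; [apply H|apply U].
Qed.

Theorem c5_c3 : Cond5 Q -> Cond3 Q.
Proof.
  intros H5 A B HA HB Psi Psis HL.
  pose proof HL as [D1 [D2 [U C]]].
  pose proof (dsym_dist Psi Psis D1 D2) as Ds.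
  split; [exact Ds|]. split.
  { apply dinv_dist; auto. apply sym_qcat; auto. apply sym_qcat; auto. }
  split.
  - intros a' a. unfold did.
    assert (H := H5 (cty A a) (cobj B) (cty B) (fun b => Psi b a) (fun b => Psis a b)).
    specialize (H ltac:(intros j k; rewrite assoc;
                       eapply le_trans; [apply comp_mono_r|apply (proj1 D1 k j a)];
                       eapply le_trans; [|apply (C k j)];
                       apply (fsup_ub (fun x => Psi k x ∘ Psis x j)))).
    specialize (H ltac:(intros j k; 
                       eapply le_trans; [apply comp_mono_l|apply (proj2 D2 a j k)];
                       eapply le_trans; [|apply (C j k)];
                       apply (fsup_ub (fun x => Psi j x ∘ Psis x k)))).
    specialize (H ltac:(eapply le_trans; [apply (proj2 HA a)|apply (U a a)])).
    eapply le_trans; [apply (id_le_comp_r _ _ H)|].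
    rewrite comp_fsup_l. apply fsup_le; intro b. unfold dcomp, dinv.
    apply (le_fsup _ b). rewrite assoc. apply comp_mono.
    + replace (meet (Psis a b) (qinv (Psi b a))) with (qinv (dsymW Psi Psis b a)).
      2:{ unfold dsymW; rewrite inv_meet, inv_inv, meet_comm; reflexivity. }
      replace (chom (sym A) a' a) with (qinv (chom (sym A) a a')).
      2:{ symmetry; apply (proj2 (sym_qcat A HA)). }
      rewrite <- inv_comp. apply inv_mono, (proj2 Ds).
    + unfold dsymW; rewrite meet_comm; apply le_refl.
  - intros b' b; unfold dcomp, dinv, did; simpl. apply fsup_le; intro a. apply meet_glb.
    + eapply le_trans; [apply comp_mono; [apply meet_l|apply inv_dsymW_le1]|].
      eapply le_trans; [|apply (C b' b)]. apply (fsup_ub (fun x => Psi b' x ∘ Psis x b)).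
    + eapply le_trans; [apply comp_mono; [apply meet_r|apply inv_dsymW_le2]|].
      rewrite <- inv_comp. apply inv_mono.
      eapply le_trans; [|apply (C b b')]. apply (fsup_ub (fun x => Psi b x ∘ Psis x b')).
Qed.

End Sym.

Section C235.
Context {Q : Quantaloid}.
Local Notation Ob := (qOb Q).
Local Notation Hom := (qHom Q).
Local Notation Cat := (QCatRaw Q).
Local Notation "f <= g" := (qle f g).
Local Notation "g ∘ f" := (qcomp g f) (at level 40, left associativity).

Lemma symhom (S : Cat) : isSym S -> forall y x, meet (chom S y x) (qinv (chom S x y)) = chom S y x.
Proof.
  intros H y x. rewrite (H x y), inv_inv.
  apply le_antisym; [apply meet_l| apply meet_glb; apply le_refl].
Qed.

Lemma transfer_sym (S B : Cat) (Phi : Dist S B) Phis :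
  isSym S -> isLeftAdjWith (sym S) B Phi Phis -> isLeftAdjWith S B Phi Phis.
Proof.
  intros HS [[P1 P2] [[R1 R2] [U C]]].
  split; [split|split; [split|split]]; auto; intros.
  - rewrite <- (symhom S HS). apply P2.
  - rewrite <- (symhom S HS). apply R1.
  - intros y x; unfold did. rewrite <- (symhom S HS). apply U.
Qed.

Theorem c3_c2 : Cond3 Q -> Cond2 Q.
Proof.
  intros H3 A HA X psi psis H.
  apply transfer_sym. apply star_sym.
  apply (H3 (star X) A (star_qcat X) HA psi psis H).
Qed.

Definition famcat (I : Type) (Xi : I -> Ob) (X : Ob) (f : forall i, Hom X (Xi i))
  (g : forall i, Hom (Xi i) X) : Cat :=
  Build_QCatRaw I Xi (fun j k => qsup (fun h : Hom (Xi k) (Xi j) => h ∘ f k <= f j /\ g j ∘ h <= g k)).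

Theorem c2_c5 : Cond2 Q -> Cond5 Q.
Proof.
  intros H2 X I Xi f g H1 Hb H3.
  set (A := famcat I Xi X f g).
  assert (HA : isQCat A).
  { split.
    - intros x y z; simpl. apply comp_qsup_r_le; intros h1 [a1 b1].
      apply comp_qsup_l_le; intros h2 [a2 b2]. apply qsup_ub; split.
      + rewrite <- assoc. eapply le_trans; [apply comp_mono_l, a2| exact a1].
      + rewrite assoc. eapply le_trans; [apply comp_mono_r, b1| exact b2].
    - intros x; simpl; apply qsup_ub; rewrite id_l, id_r; split; apply le_refl. }
  set (psi := (fun j _ => f j) : Dist (star X) A).
  set (psis := (fun _ k => g k) : Dist A (star X)).
  assert (HL : isLeftAdjWith (star X) A psi psis).
  { split; [split|split; [split|split]]; simpl; intros.
    - apply comp_qsup_r_le; intros h [a b]; exact a.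
    - rewrite id_r; apply le_refl.
    - rewrite id_l; apply le_refl.
    - apply comp_qsup_l_le; intros h [a b]; exact b.
    - intros y x; destruct y, x; simpl. exact H3.
    - intros j k; unfold dcomp, did; simpl. apply fsup_le; intros u.
      apply qsup_ub; split.
      + rewrite <- assoc; apply H1.
      + apply Hb. }
  destruct (H2 A HA X psi psis HL) as [_ [_ [U _]]].
  specialize (U tt tt). simpl in U. unfold dcomp, dinv, dsymW in U; simpl in U.
  eapply le_trans; [exact U|]. apply fsup_le; intro i. apply (le_fsup _ i).
  rewrite inv_meet, inv_inv. rewrite (meet_comm (qinv (f i))). rewrite (meet_comm (f i)).
  apply le_refl.
Qed.

End C235.

Section C12.
Context {Q : Quantaloid}.
Local Notation Ob := (qOb Q).
Local Notation Hom := (qHom Q).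
Local Notation Cat := (QCatRaw Q).
Local Notation "f <= g" := (qle f g).
Local Notation "g ∘ f" := (qcomp g f) (at level 40, left associativity).

Lemma eq_le {X Y} (f g : Hom X Y) : f = g -> f <= g.
Proof. intros ->; apply le_refl. Qed.

Lemma ccHom_eq {A : Cat} {X Y : Ob} (psi : Dist (star Y) A) psis (phi : Dist (star X) A) :
  isQCat A -> isLeftAdjWith (star Y) A psi psis -> ccHom psi phi = dcomp psis phi tt tt.
Proof.
  intros HA H; unfold ccHom; apply le_antisym.
  - apply qsup_least; intros h [p [Hp ->]].
    rewrite (radj_unique psi p psis (star_qcat Y) HA Hp H); apply le_refl.
  - apply qsup_ub; exists psis; auto.
Qed.

Lemma inv_dcomp_tt {A : Cat} {X Y : Ob} (a : Dist (star Y) A) (b : Dist (star X) A) :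
  qinv (dcomp (dinv a) b tt tt) = dcomp (dinv b) a tt tt.
Proof.
  unfold dcomp, dinv. rewrite inv_fsup. f_equal. apply functional_extensionality; intro z.
  rewrite inv_comp, inv_inv; reflexivity.
Qed.

Lemma sig_eq {B : Cat} (P : forall X : Ob, Dist (star X) B -> Prop) (X : Ob) (phi1 phi2 : Dist (star X) B)
  (p1 : P X phi1) (p2 : P X phi2) :
  phi1 = phi2 -> existT (fun X => {phi : Dist (star X) B | P X phi}) X (exist _ phi1 p1)
               = existT (fun X => {phi : Dist (star X) B | P X phi}) X (exist _ phi2 p2).
Proof. intros ->. f_equal. f_equal. apply proof_irrelevance. Qed.

Theorem c1_c2 : Cond1 Q -> Cond2 Q.
Proof.
  intros H1 A HA X psi psis H.
  destruct (H1 A HA) as [L [[FL [G [FG [GL LG]]]] HLobj]].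
  set (q := existT (fun X => {phi : Dist (star X) A | isLeftAdj (star X) A phi}) X
                   (exist _ psi (ex_intro _ psis H)) : cobj (cc A)).
  pose proof (HLobj (fmap G q)) as E. rewrite (LG q) in E. simpl in E.
  destruct (fmap G q) as [X' [phi Hphi]]. simpl in E.
  assert (EX : X' = X) by exact (f_equal (@projT1 _ _) E). subst X'.
  apply inj_pair2 in E.
  destruct (sym_qcat A HA) as [HsA _].
  assert (HL2 := la_comp phi (dinv phi) (SA A) (SAs A) (star_qcat X) HsA HA Hphi (SA_la A HA)).
  try clear q. rewrite <- E in H.
  rewrite (radj_unique _ _ _ (star_qcat X) HA H HL2).
  rewrite <- E.
  rewrite dsym_SA_comp; auto.
  - apply Hphi.
  - apply Hphi.
  - apply symla_unit_diag; auto using star_qcat.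
Qed.

Section Build.
Context (H2 : Cond2 Q) (A : Cat) (HA : isQCat A).

Lemma Lpf X (phi : Dist (star X) (sym A)) :
  isSymLeftAdj (star X) (sym A) phi -> isLeftAdj (star X) A (dcomp (SA A) phi).
Proof.
  intro H. eexists. apply la_comp; eauto using star_qcat, SA_la. apply sym_qcat; auto.
Qed.

Lemma Gpf X (psi : Dist (star X) A) :
  isLeftAdj (star X) A psi -> isSymLeftAdj (star X) (sym A) (dsym (star X) A psi).
Proof.
  intros [psis H]. unfold dsym. rewrite (radj_eq psi psis (star_qcat X) HA H).
  apply (H2 A HA X psi psis H).
Qed.

Definition Lfun (p : cobj (sc (sym A))) : cobj (sym (cc A)) :=
  existT _ (projT1 p) (exist _ (dcomp (SA A) (proj1_sig (projT2 p))) (Lpf _ _ (proj2_sig (projT2 p)))).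
Definition Gfun (q : cobj (sym (cc A))) : cobj (sc (sym A)) :=
  existT _ (projT1 q) (exist _ (dsym (star (projT1 q)) A (proj1_sig (projT2 q)))
                              (Gpf _ _ (proj2_sig (projT2 q)))).
Definition LF : QFun (sc (sym A)) (sym (cc A)) := Build_QFun Lfun (fun p => eq_refl).
Definition GF : QFun (sym (cc A)) (sc (sym A)) := Build_QFun Gfun (fun p => eq_refl).

Lemma dsym_eq X (psi : Dist (star X) A) psis :
  isLeftAdjWith (star X) A psi psis -> dsym (star X) A psi = dsymW psi psis.
Proof. intro H; unfold dsym; rewrite (radj_eq psi psis (star_qcat X) HA H); reflexivity. Qed.

Lemma LF_functor : isFunctor LF.
Proof.
  destruct (sym_qcat A HA) as [HsA _].
  intros [Y [phiy Hy]] [X [phix Hx]]. simpl.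
  rewrite (ccHom_eq phiy (dinv phiy) phix HsA Hy).
  rewrite (ccHom_eq _ _ _ HA (la_comp phiy (dinv phiy) (SA A) (SAs A) (star_qcat Y) HsA HA Hy (SA_la A HA))).
  rewrite (ccHom_eq _ _ _ HA (la_comp phix (dinv phix) (SA A) (SAs A) (star_qcat X) HsA HA Hx (SA_la A HA))).
  assert (K : forall X Y (a : Dist (star Y) (sym A)) (b : Dist (star X) (sym A)),
             isDist (star X) (sym A) b ->
             dcomp (dinv a) b tt tt <= dcomp (dcomp (dinv a) (SAs A)) (dcomp (SA A) b) tt tt).
  { intros X0 Y0 a b Db. rewrite <- dcomp_assoc. rewrite (dcomp_assoc (SAs A)).
    apply (dcomp_mono (dinv a) (dinv a) b); [apply dle_refl|].
    eapply dle_trans; [| apply dcomp_mono; [apply (proj1 (proj2 (proj2 (SA_la A HA)))) | apply dle_refl]].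
    rewrite (dist_id_l b HsA Db). apply dle_refl. }
  apply meet_glb.
  - apply K, Hx.
  - eapply le_trans; [apply eq_le; symmetry; apply (inv_dcomp_tt (A:=sym A) phix phiy)|].
    apply inv_mono, K, Hy.
Qed.

Lemma GF_functor : isFunctor GF.
Proof.
  intros [Y [psiy [py Hy]]] [X [psix [px Hx]]]. simpl.
  assert (Sy := Gpf Y psiy (ex_intro _ py Hy)).
  assert (Sx := Gpf X psix (ex_intro _ px Hx)).
  rewrite (ccHom_eq _ _ psix HA Hy). rewrite (ccHom_eq _ _ psiy HA Hx).
  destruct (sym_qcat A HA) as [HsA _].
  rewrite (ccHom_eq _ _ _ HsA Sy).
  rewrite (dsym_eq X psix px Hx) in *. rewrite (dsym_eq Y psiy py Hy) in *.
  destruct Hx as [[Dx1 Dx2] [[Ex1 Ex2] [Ux Cx]]].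
  destruct Hy as [[Dy1 Dy2] [[Ey1 Ey2] [Uy Cy]]].
  set (y := meet _ _).
  eapply le_trans; [apply (id_le_comp_r y _ (symla_unit_diag _ (star_qcat X) Sx tt))|].
  unfold dcomp at 1. rewrite comp_fsup_l. unfold dinv. apply fsup_le; intro c.
  apply (le_fsup _ c). rewrite assoc. apply comp_mono_r.
  unfold dsymW at 2. rewrite inv_meet, inv_inv. apply meet_glb.
  - unfold y. eapply le_trans; [apply comp_mono; [apply meet_r|apply (inv_dsymW_le2 psix px c tt)]|].
    rewrite <- inv_comp. apply inv_mono. unfold dcomp. apply comp_fsup_l_le; intro a.
    rewrite assoc. eapply le_trans; [apply comp_mono_r|apply (Dy1 c a tt)].
    eapply le_trans; [|apply (Cx c a)]. apply (fsup_ub (fun u => psix c u ∘ px u a)).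
  - unfold y. eapply le_trans; [apply comp_mono; [apply meet_l|apply (inv_dsymW_le1 psix px c tt)]|].
    unfold dcomp. rewrite comp_fsup_r. apply fsup_le; intro a.
    rewrite <- assoc. eapply le_trans; [apply comp_mono_l|apply (Ey2 tt a c)].
    eapply le_trans; [|apply (Cx a c)]. apply (fsup_ub (fun u => psix a u ∘ px u c)).
Qed.

Lemma GL_id p : fmap GF (fmap LF p) = p.
Proof.
  destruct p as [X [phi Hphi]]. simpl. unfold Gfun; simpl. apply (sig_eq (fun X phi => isSymLeftAdj (star X) (sym A) phi)).
  destruct (sym_qcat A HA) as [HsA _].
  rewrite (dsym_eq X _ _ (la_comp phi (dinv phi) (SA A) (SAs A) (star_qcat X) HsA HA Hphi (SA_la A HA))).
  apply dsym_SA_comp; auto; try apply Hphi.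
  apply symla_unit_diag; auto using star_qcat.
Qed.

Lemma LG_id q : fmap LF (fmap GF q) = q.
Proof.
  destruct q as [X [psi [psis H]]]. simpl. unfold Lfun; simpl. apply (sig_eq (fun X phi => isLeftAdj (star X) A phi)).
  assert (S := Gpf X psi (ex_intro _ psis H)).
  rewrite (dsym_eq X psi psis H) in *.
  apply SA_dsym; try apply H. apply (symla_unit_diag (S:=star X)); auto using star_qcat.
Qed.

End Build.

Theorem c2_c1 : Cond2 Q -> Cond1 Q.
Proof.
  intros H2 A HA. exists (LF A HA). split.
  - split; [apply LF_functor|]. exists (GF H2 A HA). split; [apply GF_functor|].
    split; [apply GL_id|apply LG_id].
  - intro p; reflexivity.
Qed.

End C12.

Section Moreover.
Context {Q : Quantaloid}.
Local Notation Ob := (qOb Q).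
Local Notation Hom := (qHom Q).
Local Notation Cat := (QCatRaw Q).
Local Notation "f <= g" := (qle f g).
Local Notation "g ∘ f" := (qcomp g f) (at level 40, left associativity).

Lemma dsym_eqG (A B : Cat) (Phi : Dist A B) Phis :
  isQCat A -> isQCat B -> isLeftAdjWith A B Phi Phis -> dsym A B Phi = dsymW Phi Phis.
Proof. intros HA HB H; unfold dsym; rewrite (radj_eq Phi Phis HA HB H); reflexivity. Qed.

Definition repR {A B : Cat} (F : QFun A B) : Dist B A :=
  fun x y => castcod (fty F x) (chom B (fmap F x) y).

Lemma rep_la {A B : Cat} (F : QFun A B) :
  isQCat A -> isQCat B -> isFunctor F -> isLeftAdjWith A B (rep F) (repR F).
Proof.
  intros [HA1 HA2] [HB1 HB2] HF. unfold rep, repR.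
  split; [split|split; [split|split]]; intros.
  - rewrite <- castdom_comp. apply castdom_mono, HB1.
  - eapply le_trans; [apply comp_mono_l, HF|].
    rewrite <- castdom_comp, cast_cancel. apply castdom_mono, HB1.
  - eapply le_trans; [apply comp_mono_r, HF|].
    rewrite castdom_castcod, <- castcod_comp, cast_cancel. apply castcod_mono, HB1.
  - rewrite <- castcod_comp. apply castcod_mono, HB1.
  - intros x' x; unfold dcomp, did. apply (le_fsup _ (fmap F x)).
    rewrite <- castdom_comp, <- castcod_comp.
    eapply le_trans; [apply HF|]. apply castdom_mono, castcod_mono, id_le_comp_r, HB2.
  - intros y y'; unfold dcomp, did. apply fsup_le; intro x.
    rewrite cast_cancel. apply HB1.
Qed.

Lemma did_la (A : Cat) : isQCat A -> isLeftAdjWith A A (did A) (did A).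
Proof.
  intro HA. pose proof (did_dist A HA). split; [auto|split; [auto|]].
  rewrite (did_did A HA). split; apply dle_refl.
Qed.

Theorem moreover : Cond3 Q -> IsRightAdjInc Q (@sym Q) (@dsym Q) /\ CommutesWithR Q (@sym Q) (@dsym Q).
Proof.
  intro H3. split.
  - split; [exact sym_qcat|]. split.
    { intros A B Phi HA HB [Phis H]. rewrite (dsym_eqG A B Phi Phis HA HB H). apply H3; auto. }
    split.
    { intros A HA. rewrite (dsym_eqG A A _ _ HA HA (did_la A HA)). intros y x; reflexivity. }
    split.
    { intros A B C Phi Psi HA HB HC [Phis HPhi] [Psis HPsi].
      pose proof (la_comp _ _ _ _ HA HB HC HPhi HPsi) as HComp.
      rewrite (dsym_eqG _ _ _ _ HA HC HComp), (dsym_eqG _ _ _ _ HA HB HPhi),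
              (dsym_eqG _ _ _ _ HB HC HPsi).
      pose proof (H3 A B HA HB Phi Phis HPhi) as SPhi.
      destruct (sym_qcat A HA) as [HsA _].
      pose proof (symla_unit_diag (S := sym A) _ HsA SPhi) as UPhi.
      destruct HPhi as [[D1 D2] [[E1 E2] [U Cn]]].
      destruct HPsi as [[F1 F2] [[G1 G2] [V W]]].
      intros c a. apply le_antisym.
      - set (x := dsymW _ _ c a).
        eapply le_trans; [apply (id_le_comp_r x _ (UPhi a))|].
        unfold dcomp at 1, dinv. rewrite comp_fsup_l. apply fsup_le; intro b.
        unfold dcomp. apply (le_fsup _ b). rewrite assoc. apply comp_mono_r.
        change (dsymW Psi Psis c b) with (meet (Psi c b) (qinv (Psis b c))). apply meet_glb.
        + unfold x, dsymW at 1. eapply le_trans; [apply comp_mono; [apply meet_l|apply (inv_dsymW_le1 Phi Phis b a)]|].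
          unfold dcomp.
          rewrite comp_fsup_r. apply fsup_le; intro b'. rewrite <- assoc.
          eapply le_trans; [apply comp_mono_l|apply (F2 c b' b)].
          eapply le_trans; [|apply (Cn b' b)]. apply (fsup_ub (fun u => Phi b' u ∘ Phis u b)).
        + unfold x, dsymW at 1. eapply le_trans; [apply comp_mono; [apply meet_r|apply (inv_dsymW_le2 Phi Phis b a)]|].
          unfold dcomp.
          rewrite <- inv_comp. apply inv_mono. apply comp_fsup_l_le; intro b'. rewrite assoc.
          eapply le_trans; [apply comp_mono_r|apply (G1 b b' c)].
          eapply le_trans; [|apply (Cn b b')]. apply (fsup_ub (fun u => Phi b u ∘ Phis u b')).
      - unfold dcomp at 1. apply fsup_le; intro b. unfold dsymW; apply meet_glb.
        + eapply le_trans; [apply comp_mono; apply meet_l|].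
          apply (fsup_ub (fun u => Psi c u ∘ Phi u a)).
        + eapply le_trans; [apply comp_mono; apply meet_r|].
          rewrite <- inv_comp. apply inv_mono. unfold dcomp.
          apply (fsup_ub (fun u => Phis a u ∘ Psis u c)). }
    exists (fun A => SA A). split; [|split].
    + intros A HA. eexists. apply SA_la; auto.
    + intros A B Phi HA HB [Phis H]. cbv beta. rewrite (dsym_eqG _ _ _ _ HA HB H).
      pose proof (H3 A B HA HB Phi Phis H) as SPhi.
      destruct (sym_qcat A HA) as [HsA _].
      pose proof (symla_unit_diag (S := sym A) _ HsA SPhi) as UPhi.
      rewrite (SA_dsym Phi Phis); try apply H; auto.
      intros b a. unfold dcomp, SA. apply le_antisym.
      * apply fsup_le; intro; apply (proj2 (proj1 H)).
      * apply (le_fsup _ a). apply id_le_comp_r, (proj2 HA).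
    + intros S A Phi HS SS HA [Phis H]. cbv beta.
      pose proof (transfer_sym S (sym A) _ _ SS (H3 S A HS HA Phi Phis H)) as SPhi.
      exists (dsymW Phi Phis). split; [exact SPhi|]. split.
      * assert (E : dcomp (SA A) (dsymW Phi Phis) = Phi).
        { apply SA_dsym; try apply H. apply (symla_unit_diag (S := S)); auto. }
        intros y x. exact (f_equal (fun F : Dist (sym S) A => F y x) E).
      * intros Phi'' SP E. apply deq_eq in E. subst Phi.
        destruct (sym_qcat A HA) as [HsA _].
        pose proof (la_comp _ _ _ _ HS HsA HA SP (SA_la A HA)) as HL2.
        rewrite (radj_unique _ _ _ HS HA H HL2).
        rewrite dsym_SA_comp; try apply SP; auto.
        intros y x; reflexivity.
        apply (symla_unit_diag (S := S)); auto.
  - split; [reflexivity|].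
    intros A B F HA HB HF. f_equal.
    rewrite (dsym_eqG _ _ _ _ HA HB (rep_la F HA HB HF)).
    apply deq_eq; intros b a. unfold dsymW, rep, repR; simpl.
    rewrite inv_castcod, castdom_meet. reflexivity.
Qed.

End Moreover.

Section C42.
Context {Q : Quantaloid}.
Local Notation Ob := (qOb Q).
Local Notation Hom := (qHom Q).
Local Notation Cat := (QCatRaw Q).
Local Notation "f <= g" := (qle f g).
Local Notation "g ∘ f" := (qcomp g f) (at level 40, left associativity).

Section Plus.
Context (A : Cat) (HA : isQCat A) (X : Ob) (psi : Dist (star X) A) (psis : Dist A (star X))
        (H : isLeftAdjWith (star X) A psi psis).

Definition plus_ty (o : option (cobj A)) : Ob :=
  match o with Some a => cty A a | None => X end.

Definition plus_hom (y x : option (cobj A)) : Hom (plus_ty x) (plus_ty y) :=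
  match y as y0, x as x0 return Hom (plus_ty x0) (plus_ty y0) with
  | Some b, Some a => chom A b a
  | Some b, None => psi b tt
  | None, Some a => psis tt a
  | None, None => dcomp psis psi tt tt
  end.

Definition Ap : Cat := Build_QCatRaw (option (cobj A)) plus_ty plus_hom.

Lemma Ap_qcat : isQCat Ap.
Proof.
  destruct HA as [HA1 HA2].
  destruct H as [[P1 P2] [[R1 R2] [U C]]].
  assert (K1 : forall c a, psi c tt ∘ psis tt a <= chom A c a).
  { intros c a. eapply le_trans; [|apply (C c a)]. apply (fsup_ub (fun u => psi c u ∘ psis u a)). }
  assert (K2 : forall c, psi c tt ∘ dcomp psis psi tt tt <= psi c tt).
  { intros c. unfold dcomp. apply comp_fsup_l_le; intro b. rewrite assoc.
    eapply le_trans; [apply comp_mono_r, K1|apply (P1 c b tt)]. }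
  split.
  - intros [a|] [b|] [c|]; simpl.
    + apply HA1.
    + apply R2.
    + apply K1.
    + apply comp_fsup_r_le; intro b. rewrite <- assoc.
      eapply le_trans; [apply comp_mono_l, K1|apply R2].
    + apply P1.
    + apply (fsup_ub (fun u => psis tt u ∘ psi u tt)).
    + apply K2.
    + apply comp_fsup_r_le; intro b. rewrite <- assoc. apply (le_fsup _ b).
      apply comp_mono_l, K2.
  - intros [a|]; simpl. apply HA2. apply (U tt tt).
Qed.

Definition incl : QFun A Ap := @Build_QFun Q A Ap (fun a => Some a) (fun a => eq_refl).
Definition Fp : QFun (star X) Ap := @Build_QFun Q (star X) Ap (fun _ => None) (fun _ => eq_refl).
Definition inclS : Dist Ap A := fun a z => chom Ap (Some a) z.

Lemma incl_functor : isFunctor incl.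
Proof. intros y x; apply le_refl. Qed.
Lemma Fp_functor : isFunctor Fp.
Proof. intros [] []; simpl. apply (proj1 (proj2 (proj2 H)) tt tt). Qed.

Lemma psi_eq : psi = dcomp inclS (rep Fp).
Proof.
  apply deq_eq; intros a u; destruct u. symmetry.
  exact (f_equal (fun F : Dist Ap Ap => F (Some a) None) (did_did Ap Ap_qcat)).
Qed.

Lemma full_eq : dcomp inclS (rep incl) = did A.
Proof.
  apply deq_eq; intros a a'.
  exact (f_equal (fun F : Dist Ap Ap => F (Some a) (Some a')) (did_did Ap Ap_qcat)).
Qed.

Lemma dens_eq : dcomp (rep incl) inclS = did Ap.
Proof.
  destruct Ap_qcat as [Q1 Q2].
  destruct HA as [HA1 HA2].
  apply deq_eq; intros z z'. unfold dcomp, rep, inclS, did. apply le_antisym.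
  - apply fsup_le; intro a; exact (Q1 z' (Some a) z).
  - destruct z as [b|], z' as [b'|]; simpl.
    + apply (le_fsup _ b); simpl. apply id_le_comp_l, HA2.
    + apply (le_fsup _ b); simpl. apply id_le_comp_l, HA2.
    + apply (le_fsup _ b'); simpl. apply id_le_comp_r, HA2.
    + apply le_refl.
Qed.

Lemma inclS_la : isLeftAdjWith Ap A inclS (rep incl).
Proof.
  pose proof (rep_la incl HA Ap_qcat incl_functor) as [D1 [D2 _]].
  split; [exact D2|]. split; [exact D1|]. split.
  - rewrite dens_eq; apply dle_refl.
  - rewrite full_eq; apply dle_refl.
Qed.

Definition inclSs : Dist (sym Ap) (sym A) := fun a z => chom (sym Ap) (Some a) z.

Definition PP := (fun p : QCatRaw Q * QCatRaw Q => Dist (fst p) (snd p)).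

Lemma key (Z1 Z2 Z3 : Cat) (e1 : Z1 = sym A) (e2 : Z2 = sym Ap) (e3 : Z3 = sym (star X))
  (Ginc : Dist Z1 Z2) (Gincs : Dist Z2 Z1) (GF : Dist Z3 Z2) (Gpsi : Dist Z3 Z1)
  (C1 : existT PP (Z1, Z2) Ginc = existT PP (sym A, sym Ap) (rep (symF incl)))
  (C2 : existT PP (Z3, Z2) GF = existT PP (sym (star X), sym Ap) (rep (symF Fp)))
  (F3 : dcomp Ginc Gincs = did Z2)
  (F2 : Gpsi = dcomp Gincs GF)
  (DG : isDist Z2 Z1 Gincs)
  (SG : isSymLeftAdj Z3 Z1 Gpsi) :
  isSymLeftAdj (star X) (sym A) (dsymW psi psis).
Proof.
  subst Z1 Z2 Z3. apply inj_pair2 in C1. apply inj_pair2 in C2. subst Ginc GF.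
  destruct (sym_qcat A HA) as [HsA _].
  destruct (sym_qcat Ap Ap_qcat) as [HsAp _].
  assert (DS : isDist (sym Ap) (sym A) inclSs).
  { destruct HsAp as [Q1 _]. split; intros.
    - exact (Q1 x (Some y) (Some y')).
    - exact (Q1 x' x (Some y)). }
  assert (FS : dcomp inclSs (rep (symF incl)) = did (sym A)).
  { apply deq_eq; intros a a'.
    exact (f_equal (fun F : Dist (sym Ap) (sym Ap) => F (Some a) (Some a')) (did_did (sym Ap) HsAp)). }
  assert (EG : Gincs = inclSs).
  { rewrite <- (dist_id_l Gincs HsA DG). rewrite <- FS. rewrite <- dcomp_assoc.
    rewrite F3. apply dist_id_r; auto. }
  subst Gincs.
  assert (E : dcomp inclSs (rep (symF Fp)) = dsymW psi psis).
  { apply deq_eq; intros a u; destruct u.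
    exact (f_equal (fun F : Dist (sym Ap) (sym Ap) => F (Some a) None) (did_did (sym Ap) HsAp)). }
  rewrite E in F2. subst Gpsi.
  apply transfer_sym; [apply star_sym|exact SG].
Qed.

End Plus.

Theorem c4_c2 : Cond4 Q -> Cond2 Q.
Proof.
  intros [G0 [G1 [HR HC]]] A HA X psi psis H.
  destruct HR as [Hcat [Hsym [Hid [Hcomp _]]]]. destruct HC as [HG0 HG1].
  pose proof (Ap_qcat A HA X psi psis H) as HAp.
  pose proof (rep_la (incl A X psi psis) HA HAp (incl_functor A X psi psis)) as L1.
  pose proof (inclS_la A HA X psi psis H) as L2.
  pose proof (rep_la (Fp A X psi psis) (star_qcat X) HAp (Fp_functor A X psi psis H)) as L3.
  assert (F3 := Hcomp (Ap A X psi psis) A (Ap A X psi psis) (inclS A X psi psis) (rep (incl A X psi psis)) HAp HA HAp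
                 (ex_intro _ _ L2) (ex_intro _ _ L1)).
  rewrite (dens_eq A HA X psi psis H) in F3.
  assert (F3' := Hid (Ap A X psi psis) HAp).
  apply deq_eq in F3. apply deq_eq in F3'. rewrite F3' in F3.
  assert (F2 := Hcomp (star X) (Ap A X psi psis) A (rep (Fp A X psi psis)) (inclS A X psi psis)
                 (star_qcat X) HAp HA (ex_intro _ _ L3) (ex_intro _ _ L2)).
  rewrite <- (psi_eq A HA X psi psis H) in F2. apply deq_eq in F2.
  assert (DG := proj1 (Hsym (Ap A X psi psis) A (inclS A X psi psis) HAp HA (ex_intro _ _ L2))).
  assert (SG := Hsym (star X) A psi (star_qcat X) HA (ex_intro _ _ H)).
  apply (key A HA X psi psis H (G0 A) (G0 (Ap A X psi psis)) (G0 (star X)) (HG0 A HA) (HG0 (Ap A X psi psis) HAp)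
           (HG0 (star X) (star_qcat X)) _ _ _ _
           (HG1 A (Ap A X psi psis) (incl A X psi psis) HA HAp (incl_functor A X psi psis))
           (HG1 (star X) (Ap A X psi psis) (Fp A X psi psis) (star_qcat X) HAp (Fp_functor A X psi psis H))
           (eq_sym F3) F2 DG SG).
Qed.

End C42.

Theorem theorem3p7 (Q : Quantaloid) :
  (Cond1 Q <-> Cond2 Q) /\ (Cond2 Q <-> Cond3 Q) /\ (Cond3 Q <-> Cond4 Q) /\
  (Cond4 Q <-> Cond5 Q) /\
  (Cond1 Q /\ Cond2 Q /\ Cond3 Q /\ Cond4 Q /\ Cond5 Q ->
     IsRightAdjInc Q (@sym Q) (@dsym Q) /\ CommutesWithR Q (@sym Q) (@dsym Q)).
Proof.
  assert (H34 : Cond3 Q -> Cond4 Q).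
  { intro H3. exists (@sym Q), (@dsym Q). apply moreover; auto. }
  split; [split; [apply c1_c2|apply c2_c1]|].
  split; [split; [intro; apply c5_c3, c2_c5; auto|apply c3_c2]|].
  split; [split; [exact H34|intro; apply c5_c3, c2_c5, c4_c2; auto]|].
  split; [split; [intro; apply c2_c5, c4_c2; auto|intro; apply H34, c5_c3; auto]|].
  intros [_ [_ [H3 _]]]. apply moreover; auto.
Qed.
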